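(* For every positive integer $n$, $$\sum_{k=1}^n(2k+1)M_k^2=\sum_{k=0}^{n+1}\frac{(4n-2k+3)(n+k+2)}{n+2}\binom{n+k+1}{2k}\binom{2k}{k}\binom{2k+1}{k}(-3)^{n+1-k}.$$
   Context: $M_n=\sum_{k=0}^{\lfloor n/2\rfloor}\binom{n}{2k}\frac{1}{k+1}\binom{2k}{k}$ is the $n$-th Motzkin number. *)

(* Defs.v *)
From mathcomp Require Import all_boot all_algebra.
Set Implicit Arguments. Unset Strict Implicit. Unset Printing Implicit Defensive.
Import GRing.Theory Num.Theory.
Local Open Scope ring_scope.

Definition motzkin (n : nat) : rat :=
  \sum_(0 <= k < (n./2).+1)
     ('C(n, 2 * k))%:R * ((k.+1)%:R)^-1 * ('C(2 * k, k))%:R.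

(* Main.v *)
Require Import Defs.
From mathcomp Require Import all_boot all_algebra.
From mathcomp Require Import ring lra zify.
Import GRing.Theory Num.Theory.
Local Open Scope ring_scope.

Ltac addpos := repeat match goal with x : nat |- _ =>
  assert_fails (have : (0 <= x%:R :> rat) by assumption); have := ler0n rat x; intro end.
Ltac nz1 := first [done | apply: lt0r_neq0; addpos; lra].
Ltac nz := repeat (apply/andP; split); nz1.

Lemma binD (m m1 j : nat) : m1 = m.+1 ->
  ('C(m, j))%:R = ('C(m1, j))%:R * (m1%:R - j%:R) / m1%:R :> rat.
Proof.
move=> ->; have := mul_bin_down m.+1 j; rewrite /= => h.
have [le|lt] := leqP j m.+1.
  have h' := congr1 (fun x : nat => x%:R : rat) h; move: h'.
  rewrite !natrM natrB // => h'. apply: (mulIf (x := m.+1%:R)); first by rewrite pnatr_eq0.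
  rewrite [LHS]mulrC h'. field; nz.
by rewrite !bin_small //; [rewrite !mul0r | lia].
Qed.

Lemma binU (m j j1 : nat) : j1 = j.+1 ->
  ('C(m, j1))%:R = ('C(m, j))%:R * (m%:R - j%:R) / j1%:R :> rat.
Proof.
move=> ->; have h := mul_bin_left m j.
have [le|lt] := leqP j m.
  have h' := congr1 (fun x : nat => x%:R : rat) h; move: h'.
  rewrite !natrM natrB // => h'. apply: (mulIf (x := j.+1%:R)); first by rewrite pnatr_eq0.
  rewrite mulrC h'. field; nz.
by rewrite !bin_small //; [rewrite !mul0r | lia].
Qed.

Lemma binDiag (m j : nat) :
  ('C(m.+1, j.+1))%:R = ('C(m, j))%:R * m.+1%:R / j.+1%:R :> rat.
Proof.
have h := mul_bin_diag m.+1 j; rewrite /= in h.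
have h' := congr1 (fun x : nat => x%:R : rat) h; move: h'.
rewrite !natrM => h'. apply: (mulIf (x := j.+1%:R)); first by rewrite pnatr_eq0.
rewrite mulrC -h'. field; nz.
Qed.

Lemma cen1 (k : nat) : ('C(2*k+1, k))%:R = ('C(2*k, k))%:R * (2*k+1)%:R / k.+1%:R :> rat.
Proof.
rewrite -(bin_sub (n:=2*k+1) (m:=k)); last lia.
rewrite (_ : (2*k+1-k = k.+1)%N); last lia.
by rewrite (_ : (2*k+1 = (2*k).+1)%N) ?binDiag //; lia.
Qed.

Lemma cen2 (k : nat) : ('C(2*k+2, k.+1))%:R = ('C(2*k, k))%:R * (2 * (2*k+1))%:R / k.+1%:R :> rat.
Proof.
rewrite (_ : (2*k+2 = (2*k+1).+1)%N); last lia.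
rewrite binDiag cen1. rewrite !natrM !natrD. field; nz.
Qed.

Definition f (m k : nat) : rat :=
  ('C(m, 2 * k))%:R * ((k.+1)%:R)^-1 * ('C(2 * k, k))%:R.

Lemma motz_ext m K : (m./2 < K)%N -> motzkin m = \sum_(0 <= k < K) f m k.
Proof.
move=> h; rewrite /motzkin [RHS](big_cat_nat (n:=(m./2).+1)) //.
rewrite [X in _ = _ _ X]big1_seq /= ?addr0 // => k /=; rewrite mem_index_iota => /andP[hk _].
have : (m < 2 * k)%N by rewrite mul2n -ltn_half_double.
by move=> hh; rewrite /f bin_small // !mul0r.
Qed.

Definition Lm n k := (n+4)%:R * f (n+2) k - (2*n+5)%:R * f (n+1) k - (3*(n+1))%:R * f n k.
Definition Hm n j : rat := - 2 * ('C(n+1, 2*j+1))%:R * ('C(2*j+2, j.+1))%:R.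

Lemma Lm0 n : Lm n 0 = Hm n 0.
Proof.
rewrite /Lm /f /Hm !muln0 !bin0 ?add0n bin1 (_ : 'C(2,1) = 2)%N //.
rewrite ?(natrD, natrM). field; nz.
Qed.

Lemma LmS n j : Lm n j.+1 = Hm n j.+1 - Hm n j.
Proof.
have e1 := binU (n+2) (2*j+1) (2*j.+1) ltac:(lia).
have e2 := binD (n+1) (n+2) (2*j.+1) ltac:(lia).
have e3 := binD n (n+1) (2*j.+1) ltac:(lia).
have e4 := binU (n+1) (2*j.+1) (2*j.+1+1) ltac:(lia).
have e5 := cen2 j.+1.
have e6 : 'C(2*j.+1, j.+1) = 'C(2*j+2, j.+1) by rewrite (_ : (2*j.+1 = 2*j+2)%N) //; lia.
have e7 := binD (n+1) (n+2) (2*j+1) ltac:(lia).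
rewrite /Lm /Hm /f e4 e5 e6 e3 e2 e1 e7.
rewrite !(natrD, natrM). field; nz.
Qed.

Lemma motz_rec n : (n+4)%:R * motzkin (n+2) =
  (2*n+5)%:R * motzkin (n+1) + (3*(n+1))%:R * motzkin n.
Proof.
have hs : \sum_(0 <= k < n+3) Lm n k = 0.
  rewrite (_ : (n+3 = (n+2).+1)%N); last lia.
  rewrite big_nat_recl // Lm0.
  under eq_big_nat => i _ do rewrite LmS.
  rewrite telescope_sumr // /Hm (bin_small (n:=n+1) (m:=2*(n+2)+1)); last lia.
  by rewrite mulr0 mul0r addrC subrK.
rewrite (motz_ext (n+2) (n+3)) ?(motz_ext (n+1) (n+3)) ?(motz_ext n (n+3)); try (rewrite ltn_half_double -mul2n; lia).
move: hs; rewrite /Lm !sumrB -!mulr_sumr => h.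
by rewrite -[RHS]addr0 -[X in _ = _ + X]h; ring.
Qed.

Definition a0 : rat -> rat := locked (fun x : rat => ((((8*100+50)*100+50)) + x*((((15*100+18)*100+75)) + x*((((10*100+69)*100+47)) + x*((((3*100+71)*100+52)) + x*(((63*100+72)) + x*((4*100+32)))))))).
Lemma a0E x : a0 x = ((((8*100+50)*100+50)) + x*((((15*100+18)*100+75)) + x*((((10*100+69)*100+47)) + x*((((3*100+71)*100+52)) + x*(((63*100+72)) + x*((4*100+32))))))).
Proof. by rewrite /a0 -lock. Qed.

Definition a1 : rat -> rat := locked (fun x : rat => ((-((3*100+55)*100+32)) + x*((-((7*100+17)*100+3)) + x*((-((5*100+76)*100+33)) + x*((-((2*100+28)*100+24)) + x*((-(44*100+28)) + x*(-(3*100+36)))))))).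
Lemma a1E x : a1 x = ((-((3*100+55)*100+32)) + x*((-((7*100+17)*100+3)) + x*((-((5*100+76)*100+33)) + x*((-((2*100+28)*100+24)) + x*((-(44*100+28)) + x*(-(3*100+36))))))).
Proof. by rewrite /a1 -lock. Qed.

Definition a2 : rat -> rat := locked (fun x : rat => ((-((2*100+7)*100+36)) + x*((-((3*100+91)*100+41)) + x*((-((2*100+83)*100+23)) + x*((-(99*100+4)) + x*((-(16*100+84)) + x*(-(1*100+12)))))))).
Lemma a2E x : a2 x = ((-((2*100+7)*100+36)) + x*((-((3*100+91)*100+41)) + x*((-((2*100+83)*100+23)) + x*((-(99*100+4)) + x*((-(16*100+84)) + x*(-(1*100+12))))))).
Proof. by rewrite /a2 -lock. Qed.

Definition a3 : rat -> rat := locked (fun x : rat => (((33*100+0)) + x*(((62*100+5)) + x*(((44*100+49)) + x*(((15*100+28)) + x*(((2*100+52)) + x*(16))))))).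
Lemma a3E x : a3 x = (((33*100+0)) + x*(((62*100+5)) + x*(((44*100+49)) + x*(((15*100+28)) + x*(((2*100+52)) + x*(16)))))).
Proof. by rewrite /a3 -lock. Qed.

Definition qq : rat -> rat -> rat := locked (fun x y : rat => ((-((33*100+73)*100+65)) + x*((-((77*100+31)*100+36)) + x*((-((71*100+96)*100+16)) + x*((-((34*100+97)*100+76)) + x*((-((9*100+39)*100+36)) + x*((-((1*100+32)*100+48)) + x*(-(7*100+68)))))))) * y^+0 + ((-((18*100+52)*100+20)) + x*((-((43*100+27)*100+68)) + x*((-((41*100+28)*100+32)) + x*((-((20*100+67)*100+84)) + x*((-((5*100+75)*100+36)) + x*((-(84*100+48)) + x*(-(5*100+12)))))))) * y^+1 + ((((2*100+64)*100+60)) + x*((((5*100+51)*100+4)) + x*((((4*100+46)*100+8)) + x*((((1*100+76)*100+0)) + x*(((33*100+92)) + x*((2*100+56))))))) * y^+2).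
Lemma qqE x y : qq x y = ((-((33*100+73)*100+65)) + x*((-((77*100+31)*100+36)) + x*((-((71*100+96)*100+16)) + x*((-((34*100+97)*100+76)) + x*((-((9*100+39)*100+36)) + x*((-((1*100+32)*100+48)) + x*(-(7*100+68)))))))) * y^+0 + ((-((18*100+52)*100+20)) + x*((-((43*100+27)*100+68)) + x*((-((41*100+28)*100+32)) + x*((-((20*100+67)*100+84)) + x*((-((5*100+75)*100+36)) + x*((-(84*100+48)) + x*(-(5*100+12)))))))) * y^+1 + ((((2*100+64)*100+60)) + x*((((5*100+51)*100+4)) + x*((((4*100+46)*100+8)) + x*((((1*100+76)*100+0)) + x*(((33*100+92)) + x*((2*100+56))))))) * y^+2.
Proof. by rewrite /qq -lock. Qed.

Definition Bm (m k : nat) : rat :=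
  ('C(m+k+1, 2*k))%:R * ('C(2*k,k))%:R * ('C(2*k+1,k))%:R.
Definition Fp (m k : nat) : rat :=
  ((4 * m + 3)%:R - (2*k)%:R) * (m+k+2)%:R * Bm m k * (-3)^+(m+1-k).
Definition Hr (n j : nat) : rat :=
  qq n%:R j%:R * ('C(n+j+3, 2*j))%:R * ('C(2*j,j))%:R * ('C(2*j+1,j))%:R
  * (-3)^+(n+4-j) * (-4/3).
Definition Lk n k := a0 n%:R * Fp n k + a1 n%:R * Fp n.+1 k
  + a2 n%:R * Fp n.+2 k + a3 n%:R * Fp n.+3 k.

Lemma m3neq0 d : (-3 : rat)^+d != 0.
Proof. by apply: expf_neq0. Qed.

Lemma Fp_pow m j d N : (m + d = N)%N -> (j <= N)%N ->
  Fp m j.+1 = ((4 * m + 3)%:R - (2*j.+1)%:R) * (m+j.+1+2)%:R * Bm m j.+1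
    * (-3)^+(N-j) / (-3)^+d.
Proof.
move=> hN hj; rewrite /Fp; have [le|lt] := leqP j m.
  rewrite (_ : (N - j = (m+1-j.+1) + d)%N); last lia.
  rewrite exprD; field; exact: m3neq0.
by rewrite /Bm bin_small ?(mul0r, mulr0) //; lia.
Qed.

Lemma Lk0 n : Lk n 0 = Hr n 0.
Proof.
have e1 : (n.+1+1 = n+2)%N by lia.
have e2 : (n.+2+1 = n+3)%N by lia.
have e3 : (n.+3+1 = n+4)%N by lia.
rewrite /Lk /Fp /Hr /Bm !muln0 !bin0 !subn0 e1 e2 e3 !exprD.
rewrite a0E a1E a2E a3E !qqE.
field; nz.
Qed.

Lemma LkS n j : (j <= n+3)%N -> Lk n j.+1 = Hr n j.+1 - Hr n j.
Proof.
move=> hj.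
have f0 := Fp_pow n j 3 (n+3) erefl hj.
have f1 := Fp_pow n.+1 j 2 (n+3) ltac:(lia) hj.
have f2 := Fp_pow n.+2 j 1 (n+3) ltac:(lia) hj.
have f3 := Fp_pow n.+3 j 0 (n+3) ltac:(lia) hj.
have x1 : (n+4-j.+1 = n+3-j)%N by lia.
have x2 : (n+4-j = (n+3-j).+1)%N by lia.
rewrite /Lk f0 f1 f2 f3 /Hr x1 x2 exprS /Bm.
rewrite cen1.
have y0 : (2*j.+1 = 2*j+2)%N by lia.
have t0 : (n+j.+1+1 = n+j+2)%N by lia.
have t1 : (n.+1+j.+1+1 = n+j+3)%N by lia.
have t2 : (n.+2+j.+1+1 = n+j+4)%N by lia.
have t3 : (n.+3+j.+1+1 = n+j+5)%N by lia.
have t4 : (n+j.+1+3 = n+j+4)%N by lia.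
rewrite y0 t0 t1 t2 t3 t4 cen2 cen1.
have b0 := binD (n+j+2) (n+j+3) (2*j+2) ltac:(lia).
have b1 := binD (n+j+3) (n+j+4) (2*j+2) ltac:(lia).
have b2 := binD (n+j+4) (n+j+5) (2*j+2) ltac:(lia).
have b3 := binU (n+j+5) (2*j+1) (2*j+2) ltac:(lia).
have b4 := binU (n+j+5) (2*j) (2*j+1) ltac:(lia).
have b5 := binD (n+j+3) (n+j+4) (2*j) ltac:(lia).
have b6 := binD (n+j+4) (n+j+5) (2*j) ltac:(lia).
rewrite b0 b1 b2 b3 b4 b5 b6.
rewrite a0E a1E a2E a3E !qqE.
rewrite !expr0 !expr1 !exprS expr0.
field; nz.
Qed.

Lemma sum4 (c0 c1 c2 c3 : rat) (G0 G1 G2 G3 : nat -> rat) K :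
  c0 * \sum_(0 <= k < K) G0 k + c1 * \sum_(0 <= k < K) G1 k
  + c2 * \sum_(0 <= k < K) G2 k + c3 * \sum_(0 <= k < K) G3 k
  = \sum_(0 <= k < K) (c0 * G0 k + c1 * G1 k + c2 * G2 k + c3 * G3 k).
Proof. by rewrite !mulr_sumr -!big_split. Qed.

Definition Rp (m : nat) : rat := \sum_(0 <= k < m.+2) Fp m k.

Lemma Rp_ext m K : (m.+2 <= K)%N -> Rp m = \sum_(0 <= k < K) Fp m k.
Proof.
move=> h; rewrite /Rp [RHS](big_cat_nat (n:=m.+2)) //.
rewrite [X in _ = _ _ X]big1_seq /= ?addr0 // => k /=; rewrite mem_index_iota => /andP[hk _].
by rewrite /Fp /Bm bin_small ?(mul0r, mulr0) //; lia.
Qed.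

Lemma Rp_rec n : a0 n%:R * Rp n + a1 n%:R * Rp n.+1 + a2 n%:R * Rp n.+2
  + a3 n%:R * Rp n.+3 = 0.
Proof.
rewrite (Rp_ext n (n+5)); last lia.
rewrite (Rp_ext n.+1 (n+5)); last lia.
rewrite (Rp_ext n.+2 (n+5)); last lia.
rewrite (Rp_ext n.+3 (n+5)); last lia.
rewrite sum4.
change (\sum_(0 <= k < n+5) Lk n k = 0).
rewrite (_ : (n+5 = (n+4).+1)%N); last lia.
rewrite big_nat_recl // Lk0.
rewrite (eq_big_nat _ _ (F2 := fun i => Hr n i.+1 - Hr n i)); last first.
  by move=> i /andP[_ hi]; apply: LkS; lia.
rewrite telescope_sumr // /Hr (bin_small (n:=n+(n+4)+3) (m:=2*(n+4))); last lia.
by rewrite !(mulr0, mul0r) addrC subrK.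
Qed.

Definition Qc (m : nat) : rat :=
  ((6 * (m+1) * (m+3) * (4 * m + 7))%:R * motzkin m * motzkin m.+1
   - (9 * (m+1) * (m+1) * (4 * m + 9))%:R * motzkin m ^+ 2
   - ((m+3) * (m+3) * (4 * m + 5))%:R * motzkin m.+1 ^+ 2) / 4.

Lemma motz_rec2 n : motzkin (n+2) =
  ((2*n+5)%:R * motzkin (n+1) + (3*(n+1))%:R * motzkin n) / (n+4)%:R.
Proof. rewrite -motz_rec; field; nz. Qed.

Lemma motz_recS n : motzkin n.+2 =
  ((2*n+5)%:R * motzkin n.+1 + (3*(n+1))%:R * motzkin n) / (n+4)%:R.
Proof. by have := motz_rec2 n; rewrite addn2 addn1. Qed.

Lemma Qc_rec n : a0 n%:R * ((n+2)%:R * Qc n) + a1 n%:R * ((n.+1+2)%:R * Qc n.+1)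
  + a2 n%:R * ((n.+2+2)%:R * Qc n.+2) + a3 n%:R * ((n.+3+2)%:R * Qc n.+3) = 0.
Proof.
rewrite /Qc (motz_recS n.+2) (motz_recS n.+1) (motz_recS n).
rewrite a0E a1E a2E a3E. field; nz.
Qed.

Lemma init0 : Rp 0 = (0+2)%:R * Qc 0.
Proof. by apply/eqP; rewrite /Rp /Qc /Fp /Bm /motzkin unlock; vm_compute. Qed.
Lemma init1 : Rp 1 = (1+2)%:R * Qc 1.
Proof. by apply/eqP; rewrite /Rp /Qc /Fp /Bm /motzkin unlock; vm_compute. Qed.
Lemma init2 : Rp 2 = (2+2)%:R * Qc 2.
Proof. by apply/eqP; rewrite /Rp /Qc /Fp /Bm /motzkin unlock; vm_compute. Qed.

Lemma hpos (c x p : rat) : 0 < c -> 0 <= x -> 0 <= p -> 0 < c + x * p.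
Proof. move=> hc hx hp; have := mulr_ge0 hx hp; lra. Qed.

Lemma hpos0 (c x p : rat) : 0 <= c -> 0 <= x -> 0 <= p -> 0 <= c + x * p.
Proof. move=> hc hx hp; have := mulr_ge0 hx hp; lra. Qed.

Lemma a3_neq0 n : a3 n%:R != 0.
Proof.
have hx : 0 <= n%:R :> rat := ler0n _ _.
rewrite a3E; apply: lt0r_neq0; apply: hpos; [lra|exact hx|].
repeat (apply: hpos0; [lra|exact hx|]); lra.
Qed.

Lemma Rp_Q n : Rp n = (n+2)%:R * Qc n.
Proof.
suff: forall n, [/\ Rp n = (n+2)%:R * Qc n, Rp n.+1 = (n.+1+2)%:R * Qc n.+1
   & Rp n.+2 = (n.+2+2)%:R * Qc n.+2] by move=> /(_ n) [].
elim=> [|m [h0 h1 h2]]; first by split; [exact init0 | exact init1 | exact init2].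
split => //.
have r := Rp_rec m; have q := Qc_rec m.
have ha := a3_neq0 m.
apply: (mulfI ha). rewrite h0 h1 h2 in r.
lra.
Qed.

Lemma L_Q n : \sum_(1 <= k < n.+1) ((2 * k + 1)%:R * motzkin k ^+ 2 : rat) = Qc n.
Proof.
elim: n => [|n IH].
  by rewrite big_geq //; apply/eqP; rewrite /Qc /motzkin unlock; vm_compute.
rewrite big_nat_recr //= IH /Qc (motz_recS n). field; nz.
Qed.

Theorem lemma2p2 (n : nat) (hn : (0 < n)%N) :
  \sum_(1 <= k < n.+1) ((2 * k + 1)%:R * motzkin k ^+ 2 : rat)
  = \sum_(0 <= k < n.+2)
      (((4 * n + 3)%:R - (2 * k)%:R) * (n + k + 2)%:R / (n + 2)%:R
       * ('C(n + k + 1, 2 * k))%:R * ('C(2 * k, k))%:R * ('C(2 * k + 1, k))%:R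
       * (-3) ^+ (n + 1 - k)).
Proof.
rewrite L_Q; transitivity (Rp n / (n+2)%:R).
  by rewrite Rp_Q; field; nz.
rewrite /Rp mulr_suml; apply: eq_bigr => k _; rewrite /Fp /Bm; field; nz.
Qed.
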